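(* Braided crossed modules of Lie algebras are equivalently given by: vector spaces $L_1,L_0$, a linear map $\partial:L_1\to L_0$ and a bilinear map $\{-,-\}:L_0\times L_0\to L_1$ satisfying, for all $a\in L_1$ and $x,u,v,w\in L_0$, (A) $\{\partial a,x\}+\{x,\partial a\}=0$; (B) $\partial\{x,x\}=0$; (C) $\{u,\partial\{v,w\}\}+\{w,\partial\{u,v\}\}+\{v,\partial\{w,u\}\}=0$. Precisely: a braided crossed module satisfies (A),(B),(C), and conversely such data become a braided crossed module of Lie algebras when one defines $[x,y]:=\partial\{x,y\}$ on $L_0$ and $[a,b]:=\{\partial a,\partial b\}$ on $L_1$; these constructions are mutually inverse.
   Context: All vector spaces over a field $k$ of characteristic $\neq2$. A braided crossed module of Lie algebras is a Lie algebra homomorphism $\partial:L_1\to L_0$ with a bilinear map $\{-,-\}:L_0\times L_0\to L_1$ such that for all $x,y,z\in L_0$, $a,b\in L_1$: $\partial\{x,y\}=[x,y]$; $\{\partial a,\partial b\}=[a,b]$; $\{\partial a,x\}+\{x,\partial a\}=0$; $\{x,[y,z]\}+\{z,[x,y]\}+\{y,[z,x]\}=0$. *)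

(* Defs.v *)
From HB Require Import structures.
From mathcomp Require Import all_boot all_order all_algebra.
Set Implicit Arguments. Unset Strict Implicit. Unset Printing Implicit Defensive.
Import GRing.Theory.
Local Open Scope ring_scope.

Definition is_linear_map (K : fieldType) (U V : lmodType K) (f : U -> V) : Prop :=
  forall (c : K) (x y : U), f (c *: x + y) = c *: f x + f y.

Definition is_bilinear_map (K : fieldType) (U V W : lmodType K)
  (f : U -> V -> W) : Prop :=
  (forall (c : K) (x y : U) (z : V), f (c *: x + y) z = c *: f x z + f y z) /\
  (forall (c : K) (x : U) (y z : V), f x (c *: y + z) = c *: f x y + f x z).

Definition is_lie_bracket (K : fieldType) (L : lmodType K) (br : L -> L -> L)
  : Prop :=
  is_bilinear_map br /\
  (forall x, br x x = 0) /\
  (forall x y z, br x (br y z) + br y (br z x) + br z (br x y) = 0).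

Definition is_braided_crossed_module (K : fieldType) (L1 L0 : lmodType K)
  (br1 : L1 -> L1 -> L1) (br0 : L0 -> L0 -> L0)
  (d : L1 -> L0) (h : L0 -> L0 -> L1) : Prop :=
  [/\ is_lie_bracket br1, is_lie_bracket br0,
      is_linear_map d /\ (forall a b, d (br1 a b) = br0 (d a) (d b)),
      is_bilinear_map h &
      [/\ forall x y, d (h x y) = br0 x y,
          forall a b, h (d a) (d b) = br1 a b,
          forall a x, h (d a) x + h x (d a) = 0 &
          forall x y z, h x (br0 y z) + h z (br0 x y) + h y (br0 z x) = 0]].

Definition is_ABC_data (K : fieldType) (L1 L0 : lmodType K)
  (d : L1 -> L0) (h : L0 -> L0 -> L1) : Prop :=
  [/\ is_linear_map d, is_bilinear_map h,
      forall a x, h (d a) x + h x (d a) = 0,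
      forall x, d (h x x) = 0 &
      forall u v w,
        h u (d (h v w)) + h w (d (h u v)) + h v (d (h w u)) = 0].

(* Main.v *)
Require Import Defs.
From HB Require Import structures.
From mathcomp Require Import all_boot all_order all_algebra.
From Stdlib Require Import FunctionalExtensionality.
Import GRing.Theory.
Local Open Scope ring_scope.

Lemma lin_add (K : fieldType) (U V : lmodType K) (f : U -> V) :
  is_linear_map f -> forall x y, f (x + y) = f x + f y.
Proof. by move=> Hf x y; rewrite -[x in LHS]scale1r Hf scale1r. Qed.

Lemma lin_0 (K : fieldType) (U V : lmodType K) (f : U -> V) :
  is_linear_map f -> f 0 = 0.
Proof.
move=> Hf; have := @lin_add _ _ _ f Hf 0 0; rewrite addr0 => E.
by apply: (addrI (f 0)); rewrite addr0 -E.
Qed.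

Theorem proposition4p2 (K : fieldType) (L1 L0 : lmodType K)
  (char_not_2 : (2%:R : K) != 0) :
  (forall (br1 : L1 -> L1 -> L1) (br0 : L0 -> L0 -> L0)
          (d : L1 -> L0) (h : L0 -> L0 -> L1),
     is_braided_crossed_module br1 br0 d h ->
     [/\ is_ABC_data d h,
         br0 = (fun x y => d (h x y)) &
         br1 = (fun a b => h (d a) (d b))]) /\
  (forall (d : L1 -> L0) (h : L0 -> L0 -> L1),
     is_ABC_data d h ->
     is_braided_crossed_module (fun a b => h (d a) (d b))
                               (fun x y => d (h x y)) d h).
Proof.
split.
  move=> br1 br0 d h [[_ [_ _]] [_ [alt0 _]] [Hd _] Hh [E0 E1 HA HC]].
  split.
  - split=> //.
    + by move=> x; rewrite E0 alt0.
    + by move=> u v w; rewrite !E0.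
  - by apply: functional_extensionality => x;
       apply: functional_extensionality => y; rewrite E0.
  - by apply: functional_extensionality => x;
       apply: functional_extensionality => y; rewrite E1.
move=> d h [Hd [Hh1 Hh2] HA HB HC].
have dD := @lin_add _ _ _ d Hd.
have d0 := @lin_0 _ _ _ d Hd.
split.
- split; [split|split].
  + by move=> c x y z; rewrite Hd Hh1.
  + by move=> c x y z; rewrite Hd Hh2.
  + move=> a; have := HA a (d a).
    set v := h (d a) (d a) => E.
    have : (2%:R : K) *: v = 0 by rewrite scaler_nat mulr2n.
    move=> /eqP; rewrite scaler_eq0 (negbTE char_not_2) /= => /eqP //.
  + move=> a b c; have := HC (d a) (d b) (d c).
    by rewrite -addrA [h (d c) _ + _]addrC addrA.
- split; [split|split].
  + by move=> c x y z; rewrite Hh1 Hd.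
  + by move=> c x y z; rewrite Hh2 Hd.
  + exact: HB.
  + move=> x y z; have := HC x y z.
    by rewrite -!dD -addrA [h z _ + _]addrC addrA => ->.
- by split.
- by split.
- by split.
Qed.
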